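(* Let $\mathcal{D}$ be any basic action theory whose initial theory includes the axiom $$(\star)\quad [\forall \vec x\, \exists \iota \textstyle\bigwedge_i f_i(\iota) = x_i] \land [\forall \iota,\iota'.\ \textstyle\bigwedge_i f_i(\iota) = f_i(\iota') \supset \iota = \iota'],$$ let $\phi$ be any situation-suppressed $\mathcal{L}$-formula, and let $\alpha$ be any sequence of ground action terms. Then $$\frac{1}{\gamma}\sum_{\{s':\phi[s']\}} p(s',do(\alpha,S_0)) \quad\text{and}\quad \frac{1}{\gamma'}\sum_{\vec x}\langle \iota.\ \textstyle\bigwedge_i f_i(\iota) = x_i \land \phi[do(\alpha,\iota)] \to p(do(\alpha,\iota),do(\alpha,S_0))\rangle$$ define the same number (in every $\mathbb{R}$-interpretation satisfying $\mathcal{D}$), where $\gamma,\gamma'$ are the respective numerators with $\phi$ replaced by $\mathit{true}$.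
   Context: Situation calculus: a many-sorted language $\mathcal{L}$ with sorts action, situation, object; $do(a,s)$ is the successor of $s$ under action $a$, and for $\alpha=[a_1,\ldots,a_k]$, $do(\alpha,s)$ is $do(a_k,do(\ldots,do(a_1,s)\ldots))$; $S_0$ is the actual initial situation; $\mathit{Init}(s) \doteq \neg\exists a,s'.\, s = do(a,s')$; $\iota,\iota'$ range over initial situations. $f_1,\ldots,f_n$ are all the fluents, each taking only a situation argument and values in a finite set; $\vec x$ ranges over value vectors, $i$ over $1..n$. $\phi[s]$ restores situation argument $s$ in $\phi$. $\langle z.\ \psi \to t\rangle = u$ abbreviates $[(\exists z\psi)\supset \forall z(\psi \supset u = t)] \land [(\neg\exists z\psi) \supset u = 0]$. Distinguished symbols: $\mathit{Poss}(a,s)$, $p(s',s)$ (weight of $s'$ when in $s$), $l(a,s)$ (likelihood). A basic action theory consists of $\mathcal{D}_0$ containing (P1) $\forall \iota,s.\ p(s,\iota) \ge 0 \land (p(s,\iota) > 0 \supset \mathit{Init}(s))$; precondition axioms; successor state axioms including (P2) $p(s',do(a,s)) = u \equiv \exists s''[s' = do(a,s'') \land \mathit{Poss}(a,s'') \land u = p(s'',s)\times l(a,s'')] \lor \neg\exists s''[s'=do(a,s'')\land \mathit{Poss}(a,s'')] \land u = 0$; likelihood axioms; foundational axioms. Entailment is over $\mathbb{R}$-interpretations. Finite sums are abbreviations for second-order formulas. *)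

(* Defs.v *)
From HB Require Import structures.
From mathcomp Require Import all_boot all_order all_algebra.
From mathcomp Require Import boolp classical_sets fsbigop reals.
Set Implicit Arguments. Unset Strict Implicit. Unset Printing Implicit Defensive.
Import Order.TTheory GRing.Theory Num.Theory.
Local Open Scope ring_scope.

(* Situations of an interpretation satisfying the foundational axioms
   (multiple initial situations): every situation is do(alpha, iota) for a
   unique initial situation iota and a unique action sequence alpha. *)
Notation sit I A := (I * seq A)%type.

Definition do_ {I A : Type} (a : A) (s : sit I A) : sit I A := (s.1, rcons s.2 a).
Definition doseq {I A : Type} (al : seq A) (s : sit I A) : sit I A := (s.1, s.2 ++ al).
Definition isit {I A : Type} (i : I) : sit I A := (i, [::]).
Definition Init {I A : Type} (s : sit I A) : Prop := ~ exists a s', s = do_ a s'.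

(* The abbreviation  < z. psi -> t > = u  *)
Definition cond_term {I : Type} {R : numDomainType}
  (psi : I -> Prop) (t : I -> R) (u : R) : Prop :=
  ((exists z, psi z) -> forall z, psi z -> u = t z) /\
  (~ (exists z, psi z) -> u = 0).

Definition axP1 {I A : Type} {R : numDomainType} (p : sit I A -> sit I A -> R) : Prop :=
  forall (i : I) (s : sit I A),
    0 <= p s (isit i) /\ (0 < p s (isit i) -> Init s).

Definition axP2 {I A : Type} {R : numDomainType} (Poss : A -> sit I A -> Prop)
  (p : sit I A -> sit I A -> R) (l : A -> sit I A -> R) : Prop :=
  forall (s' : sit I A) (a : A) (s : sit I A) (u : R),
    p s' (do_ a s) = u <->
    (exists s'', s' = do_ a s'' /\ Poss a s'' /\ u = p s'' s * l a s'')
    \/ ((~ exists s'', s' = do_ a s'' /\ Poss a s'') /\ u = 0).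

Definition axStar {I A : Type} {n : nat} {V : 'I_n -> finType}
  (f : forall i : 'I_n, sit I A -> V i) : Prop :=
  (forall x : {dffun forall i : 'I_n, V i}, exists iota : I,
      forall i : 'I_n, f i (isit iota) = x i) /\
  (forall iota iota' : I,
      (forall i : 'I_n, f i (isit iota) = f i (isit iota')) -> iota = iota').

(* Main.v *)
Require Import Defs.
From HB Require Import structures.
From mathcomp Require Import all_boot all_order all_algebra.
From mathcomp Require Import boolp classical_sets functions fsbigop reals finmap.
Import Order.TTheory GRing.Theory Num.Theory.
Local Open Scope classical_set_scope.
Local Open Scope ring_scope.
Lemma test (R : realType) (X : finType) (J : choiceType) (h : X -> J) (G : J -> R) :
  injective h -> (forall j, (forall x, j <> h x) -> G j = 0) ->
  \sum_(j \in [set: J]) G j = \sum_x G (h x).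
Proof.
move=> hi hG.
rewrite (fsbigTE [fset h x | x : X]%fset).
  rewrite big_imfset /=; last by move=> ? ? _ _; apply: hi.
  by rewrite big_enum.
move=> j jn; apply: hG => x jx; move/negP: jn; apply; rewrite jx.
by apply/imfsetP; exists x.
Qed.
Lemma supp (R : realType) (I A : choiceType) (Poss : A -> sit I A -> Prop)
  (p : sit I A -> sit I A -> R) (l : A -> sit I A -> R) :
  axP1 p -> axP2 Poss p l -> forall alpha t s,
  p s (doseq alpha (isit t)) != 0 -> exists iota, s = doseq alpha (isit iota).
Proof.
move=> HP1 HP2; elim/last_ind => [|be a IH] t s.
  rewrite /doseq /= => hs.
  have [h0 h1] := HP1 t s.
  have /h1 hI : 0 < p s (isit t) by rewrite lt0r hs h0.
  exists s.1; case: s hI {h0 h1 hs} => i; case/lastP => [|c d] hI; first by [].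
  by exfalso; apply: hI; exists d, (i, c).
have -> : doseq (rcons be a) (isit t) = do_ a (doseq be (isit t)).
  by rewrite /doseq /do_ /= -!cats1.
move=> hs.
have := proj1 (HP2 s a (doseq be (isit t)) _) erefl.
case=> [[s'' [hs' [_ hu]]]|[_ hu]]; last by rewrite hu eqxx in hs.
have : p s'' (doseq be (isit t)) != 0.
  subst s; by apply: contraNneq hs => h; rewrite hu h mul0r.
case/IH=> iota e; subst s s''; exists iota.
by rewrite /doseq /do_ /= -!cats1.
Qed.

Theorem mainTheorem11
  (R : realType) (I A : choiceType) (n : nat) (V : 'I_n -> finType)
  (f : forall i : 'I_n, sit I A -> V i)
  (Poss : A -> sit I A -> Prop)
  (p : sit I A -> sit I A -> R) (l : A -> sit I A -> R)
  (S0 : I)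
  (HP1 : axP1 p) (HP2 : axP2 Poss p l) (Hstar : axStar f)
  (phi : sit I A -> Prop) (alpha : seq A)
  (U U' : {dffun forall i : 'I_n, V i} -> R)
  (HU : forall x : {dffun forall i : 'I_n, V i}, cond_term
          (fun iota => (forall i, f i (isit iota) = x i) /\ phi (doseq alpha (isit iota)))
          (fun iota => p (doseq alpha (isit iota)) (doseq alpha (isit S0))) (U x))
  (HU' : forall x : {dffun forall i : 'I_n, V i}, cond_term
          (fun iota => (forall i, f i (isit iota) = x i) /\ True)
          (fun iota => p (doseq alpha (isit iota)) (doseq alpha (isit S0))) (U' x)) :
  (\sum_(s' \in [set s | phi s]) p s' (doseq alpha (isit S0))) /
    (\sum_(s' \in [set s | True]) p s' (doseq alpha (isit S0)))
  = (\sum_(x : {dffun forall i : 'I_n, V i}) U x) / (\sum_(x : {dffun forall i : 'I_n, V i}) U' x).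
Proof.
case: (choice (proj1 Hstar)) => e He.
have einj : forall iota, e [ffun i => f i (isit iota)] = iota.
  by move=> iota; apply: (proj2 Hstar) => i; rewrite He ffunE.
pose h x := doseq alpha (isit (e x)) : sit I A.
have hinj : injective h.
  move=> x y /(congr1 fst) /= exy; apply/ffunP => i; by rewrite -!He exy.
have key : forall (Q : sit I A -> Prop) (UQ : {dffun forall i : 'I_n, V i} -> R),
  (forall x : {dffun forall i : 'I_n, V i}, cond_term (fun iota => (forall i, f i (isit iota) = x i) /\ Q (doseq alpha (isit iota)))
     (fun iota => p (doseq alpha (isit iota)) (doseq alpha (isit S0))) (UQ x)) ->
  \sum_(s' \in [set s | Q s]) p s' (doseq alpha (isit S0)) = \sum_x UQ x.
  move=> Q UQ HQ.
  rewrite fsbig_mkcond (@test _ _ _ h) //.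
    apply: eq_bigr => x _; case: (HQ x) => H1 H2. rewrite /patch.
    have psi_e : forall z, (forall i, f i (isit z) = x i) -> z = e x.
      move=> z hz; rewrite -(einj z); congr e; apply/ffunP => i; by rewrite ffunE hz.
    case: ifPn => [|hq].
      rewrite in_setE /= => hq; rewrite (H1 _ (e x)) //; by exists (e x); split.
    rewrite notin_setE /= in hq.
    rewrite H2 // => -[z [hz hqz]]; apply: hq; rewrite /h -(psi_e z hz) //.
  move=> j hj; rewrite /patch; case: ifP => // _.
  apply/eqP; apply: contraT => /(@supp _ _ _ _ _ _ HP1 HP2) [iota ej].
  exfalso; apply: (hj [ffun i => f i (isit iota)]); by rewrite ej /h einj.
by rewrite (key phi U HU) (key (fun _ => True) U' HU').
Qed.
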